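(* Let $H$ be a digraph with at least two vertices and $s\in V(H)$ such that every vertex of $H$ is reachable from $s$, and let $(\hat T,\{B_x\}_{x\in V(\hat T)})$ be the $s$-rooted cut decomposition of $H$. Let $y$ be a node of $\hat T$ such that the path in $\hat T$ from $s$ to $y$ contains at least $\ell\ge 1$ nodes $x$ whose sets $B_x$ are non-degenerate. Then $H$ contains an out-tree rooted at $s$ with at least $\ell$ leaves.
   Context: Digraphs are finite and without loops; paths are directed. An out-tree is an oriented tree with exactly one vertex of in-degree zero (its root); its leaves are its vertices of out-degree zero. A vertex $v$ is bi-reachable from $r$ if there are two internally vertex-disjoint directed paths from $r$ to $v$. For a digraph $H$ with at least two vertices and $r\in V(H)$ such that every vertex of $H$ is reachable from $r$, the diblock $B_r$ of $r$ in $H$ is the set of all vertices bi-reachable from $r$, together with $r$ and all out-neighbours of $r$. For $x\in B_r\setminus\{r\}$ let $X_x$ be the set of vertices $v\in V(H)\setminus B_r$ such that every directed $r$–$v$ path intersects $B_r$ for the last time in $x$; $x$ is a bottleneck of $B_r$ if $X_x\ne\emptyset$ (the sets $X_x$ partition $V(H)\setminus B_r$). The $r$-rooted cut decomposition $(\hat T,\{B_x\}_{x\in V(\hat T)})$ of $H$ is defined recursively: $\hat T$ is a rooted tree with root $r$ and $V(\hat T)\subseteq V(H)$; the set associated with the root is $B_r$; the children of $r$ are the bottlenecks of $B_r$; and for each bottleneck $x$, the subtree of $\hat T$ rooted at $x$ together with its associated sets is the $x$-rooted cut decomposition of the induced subgraph $H[X_x\cup\{x\}]$. A set $B_x$ is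 degenerate if $x$ is an internal (non-leaf) node of $\hat T$ and $|B_x|=2$; otherwise it is non-degenerate. *)

(* Defs.v *)
From mathcomp Require Import all_boot.
From Stdlib Require Import ClassicalEpsilon.
Set Implicit Arguments. Unset Strict Implicit. Unset Printing Implicit Defensive.

Definition asbool (P : Prop) : bool :=
  if excluded_middle_informative P then true else false.

Section Digraph.
Variables (V : finType) (E : rel V).

Definition dpath (A : {set V}) (u : V) (p : seq V) (v : V) : bool :=
  [&& path E u p, last u p == v, all (fun w => w \in A) (u :: p) & uniq (u :: p)].

(* internal vertices of the path u :: p (all but first and last) *)
Definition inner (p : seq V) : seq V := take (size p).-1 p.

Definition bireach (A : {set V}) (r v : V) : Prop :=
  exists p1 p2, [&& dpath A r p1 v, dpath A r p2 v & [disjoint inner p1 & inner p2]].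

Definition diblock (A : {set V}) (r : V) : {set V} :=
  [set v in A | [|| v == r, E r v | asbool (bireach A r v)]].

Definition Xset (A : {set V}) (r x : V) : {set V} :=
  [set v in A :\: diblock A r |
    asbool (forall p, dpath A r p v ->
              last r [seq u <- p | u \in diblock A r] = x)].

Definition bottleneck (A : {set V}) (r x : V) : bool :=
  (x \in diblock A r :\ r) && (Xset A r x != set0).

(* B_r is non-degenerate (1) or degenerate (0): degenerate iff r is an
   internal node of the decomposition tree (has a bottleneck child) and |B_r| = 2 *)
Definition nondeg (A : {set V}) (r : V) : nat :=
  ~~ ([exists x, bottleneck A r x] && (#|diblock A r| == 2)).

(* cdpath A r y k : in the r-rooted cut decomposition of H[A], y is a node and
   the tree path from r to y contains exactly k nodes x with B_x non-degenerate. *)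
Inductive cdpath : {set V} -> V -> V -> nat -> Prop :=
| cd_root A r : cdpath A r r (nondeg A r)
| cd_step A r x y k :
    bottleneck A r x -> cdpath (x |: Xset A r x) x y k ->
    cdpath A r y (nondeg A r + k).

Definition und (F : {set V * V}) : rel V := fun u v => ((u, v) \in F) || ((v, u) \in F).

(* (U, F) is an out-tree of H rooted at s: a subgraph of H which is an oriented
   tree (underlying graph connected with #|U|-1 edges, no opposite arcs) whose
   unique vertex of in-degree 0 is s. *)
Definition out_tree (s : V) (U : {set V}) (F : {set V * V}) : Prop :=
  s \in U /\
  [/\ forall a, a \in F -> [&& E a.1 a.2, a.1 \in U & a.2 \in U],
      forall u v, (u, v) \in F -> (v, u) \notin F,
      forall v, v \in U -> connect (und F) s v,
      #|F| = #|U| - 1 &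
      [set v in U | [forall u, (u, v) \notin F]] = [set s]].

Definition leaves (U : {set V}) (F : {set V * V}) : {set V} :=
  [set v in U | [forall w, (v, w) \notin F]].

End Digraph.

(* Main.v *)
Require Import Defs.
From mathcomp Require Import all_boot.
From Stdlib Require Import ClassicalEpsilon.
From mathcomp Require Import zify.
Set Implicit Arguments. Unset Strict Implicit. Unset Printing Implicit Defensive.

Lemma asboolP (P : Prop) : asbool P -> P.
Proof. by rewrite /asbool; case: excluded_middle_informative. Qed.

Lemma tree0 (V : finType) (E : rel V) (s : V) : out_tree E s [set s] set0.
Proof.
split; first by rewrite in_set1.
split.
- by move=> a; rewrite in_set0.
- by move=> u v; rewrite in_set0.
- by move=> v; rewrite in_set1 => /eqP ->; exact: connect0.
- by rewrite cards0 cards1.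
- apply/setP => v; rewrite in_set in_set1; case: (v == s) => //=.
  by apply/forallP => u; rewrite in_set0.
Qed.

Lemma leaves0 (V : finType) (E : rel V) (s : V) : leaves [set s] set0 = [set s].
Proof.
apply/setP => v; rewrite in_set in_set1; case: (v == s) => //=.
by apply/forallP => u; rewrite in_set0.
Qed.

Lemma tree1 (V : finType) (E : rel V) (s : V) U F u v :
  out_tree E s U F -> u \in U -> v \notin U -> E u v ->
  [/\ out_tree E s (v |: U) ((u, v) |: F),
      v \in leaves (v |: U) ((u, v) |: F) &
      {subset leaves U F :\ u <= leaves (v |: U) ((u, v) |: F)}].
Proof.
move=> [sU [hE hA hC hN hR]] uU vU Euv.
have uv : u != v by apply: contraNneq vU => <-.
have vF : forall w, (v, w) \notin F.
  by move=> w; apply/negP => /hE /= /and3P [_ /(negP vU)].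
have vF' : forall w, (w, v) \notin F.
  by move=> w; apply/negP => /hE /= /and3P [_ _ /(negP vU)].
split.
- split; first by rewrite in_setU1 sU orbT.
  split.
  + move=> a /setU1P [-> /=|aF].
      by rewrite Euv !in_setU1 eqxx uU orbT.
    by case/and3P: (hE a aF) => -> a1 a2; rewrite !in_setU1 a1 a2 !orbT.
  + move=> a b /setU1P [[-> ->]|abF].
      by rewrite !in_setU1 negb_or vF andbT xpair_eqE (negbTE uv) andbF.
    rewrite !in_setU1 negb_or (hA _ _ abF) andbT xpair_eqE.
    by apply/negP => /andP [_ /eqP eav]; move: abF; rewrite eav (negbTE (vF b)).
  + have sub : subrel (und F) (connect (und ((u, v) |: F))).
      move=> a b; rewrite /und /=; case/orP => h; apply: connect1;
      by rewrite /und !in_setU1 h !orbT.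
    move=> w /setU1P [->|wU].
      apply: connect_trans (connect_sub sub (hC _ uU)) _.
      by apply: connect1; rewrite /und in_setU1 eqxx.
    exact: (connect_sub sub (hC _ wU)).
  + rewrite !cardsU1 vU hN.
    have -> : ((u, v) \notin F) = true by apply: vF'.
    have : 0 < #|U| by apply/card_gt0P; exists s.
    move=> h; simpl nat_of_bool; lia.
  + rewrite -hR; apply/setP => w; rewrite !in_set in_set1.
    case: (w =P v) => [->|/eqP wv] /=.
      rewrite (negPf vU) /=; apply/negP => /forallP /(_ u).
      by rewrite in_setU1 eqxx.
    case: (w \in U) => //=.
    apply/forallP/forallP => h a.
      by move: (h a); rewrite in_setU1 negb_or => /andP [].
    rewrite in_setU1 negb_or h andbT xpair_eqE negb_and.
    by rewrite wv orbT.
- rewrite in_set in_setU1 eqxx /=; apply/forallP => w.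
  rewrite in_setU1 negb_or vF andbT xpair_eqE negb_and.
  by rewrite eq_sym uv.
- move=> w; rewrite in_setD1 in_set => /andP [wu /andP [wU /forallP h]].
  rewrite in_set in_setU1 wU orbT /=; apply/forallP => a.
  by rewrite in_setU1 negb_or h andbT xpair_eqE (negPf wu).
Qed.

Lemma ext_path (V : finType) (E : rel V) (s : V) U F u (p : seq V) :
  out_tree E s U F -> u \in U -> path E u p -> uniq p ->
  all (fun w => w \notin U) p ->
  exists F', [/\ out_tree E s (U :|: [set w in p]) F',
     {subset leaves U F :\ u <= leaves (U :|: [set w in p]) F'} &
     (last u p \in leaves U F) || (p != [::]) ->
       last u p \in leaves (U :|: [set w in p]) F'].
Proof.
elim: p U F u => [|v p IH] U F u tr uU pth up fr.
  have -> : U :|: [set w in [::]] = U.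
    by apply/setP => w; rewrite in_setU in_set orbF.
  exists F; split => //; last by rewrite orbF.
  by move=> w; rewrite in_setD1 => /andP [].
move/andP: pth => [Euv pth]; move: up => /= /andP [vp up].
move: fr => /= /andP [vU fr].
case: (tree1 tr uU vU Euv) => tr1 vl sub1.
have fr' : all (fun w => w \notin v |: U) p.
  apply/allP => w wp; rewrite in_setU1 negb_or (allP fr w wp) andbT.
  by apply/negP => /eqP wv; rewrite -wv wp in vp.
have [F' [tr' sub' lst]] := IH _ _ _ tr1 (setU11 v U) pth up fr'.
have eqU : v |: U :|: [set w in p] = U :|: [set w in v :: p].
  apply/setP => w; rewrite !inE.
  by case: (w == v); case: (w \in U).
rewrite -eqU; exists F'; split => //.
  move=> w wl; apply: sub'; rewrite in_setD1 (sub1 w wl) andbT.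
  move: wl; rewrite in_setD1 in_set => /andP [_ /andP [wU _]].
  by apply/negP => /eqP wv; rewrite -wv wU in vU.
move=> _ /=; apply: lst; case: p {IH pth up fr fr' sub' eqU vp tr'} => [|a q] /=; first by rewrite vl.
by rewrite orbT.
Qed.

Lemma mem_inner (V : finType) (u z : V) (p : seq V) :
  z \in p -> z != last u p -> z \in inner p.
Proof.
case/lastP: p => [|q a] //.
rewrite /inner size_rcons /= last_rcons mem_rcons in_cons.
rewrite -cats1 take_size_cat //.
by case/orP => [/eqP ->|//]; rewrite eqxx.
Qed.

Lemma diblockP (V : finType) (E : rel V) (A : {set V}) (r t : V) :
  t \in diblock E A r -> t != r -> t \in A /\ (E r t \/ bireach E A r t).
Proof.
rewrite in_set => /andP [tA /or3P [/eqP -> | h | h]]; first by rewrite eqxx.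
  by move=> _; split => //; left.
by move=> _; split => //; right; apply: asboolP.
Qed.

Lemma pathto (V : finType) (E : rel V) (A : {set V}) (r t z : V) :
  r \in A -> t \in diblock E A r -> t != r -> z != t ->
  exists p, dpath E A r p t /\ z \notin p.
Proof.
move=> rA tD tr zt; case: (diblockP tD tr) => tA [Ert | [p1 [p2 /and3P [d1 d2 dis]]]].
  exists [:: t]; split; last by rewrite in_cons orbF.
  rewrite /dpath /= Ert eqxx rA tA /= in_cons orbF eq_sym tr.
  by [].
case: (boolP (z \in p1)) => z1; last by exists p1.
case: (boolP (z \in p2)) => z2; last by exists p2.
have l1 : last r p1 = t by case/and4P: d1 => _ /eqP.
have l2 : last r p2 = t by case/and4P: d2 => _ /eqP.
have i1 : z \in inner p1 by apply: (mem_inner (u:=r) z1); rewrite l1.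
have i2 : z \in inner p2 by apply: (mem_inner (u:=r) z2); rewrite l2.
by rewrite (disjointFr dis i1) in i2.
Qed.

Lemma avoidX (V : finType) (E : rel V) (A : {set V}) (r x t u : V) (p : seq V) :
  dpath E A r p t -> u \in p -> u \in Xset E A r x -> x != r ->
  exists p1 p2, p = p1 ++ u :: p2 /\ x \in p1.
Proof.
move=> d up uX xr; case/splitPr: up d => p1 p2 d.
exists p1, p2; split => //.
move: uX; rewrite in_set => /andP [uAD /asboolP H].
have dp' : dpath E A r (rcons p1 u) u.
  move: d; rewrite /dpath => /and4P [pth _ al un].
  apply/and4P; split.
  - move: pth; rewrite cat_path -cats1 cat_path /= => /andP [-> /andP [-> _]].
    by [].
  - by rewrite last_rcons.
  - by move: al; rewrite -cats1 /= !all_cat /= => /andP [-> /andP [-> /andP [-> _]]].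
  - apply: subseq_uniq un; rewrite -cats1.
    have -> : r :: p1 ++ [:: u] = (r :: p1) ++ [:: u] by [].
    have -> : r :: p1 ++ u :: p2 = (r :: p1) ++ u :: p2 by [].
    apply: cat_subseq; first exact: subseq_refl.
    by rewrite /= eqxx sub0seq.
have := H _ dp'.
move: uAD; rewrite in_setD => /andP [uD _].
rewrite filter_rcons (negPf uD) => lx.
have := mem_last r [seq u0 <- p1 | u0 \in diblock E A r].
rewrite lx in_cons (negPf xr) /= mem_filter => /andP [_ ->].
by [].
Qed.

Lemma noX (V : finType) (E : rel V) (A : {set V}) (r x t : V) (p : seq V) :
  dpath E A r p t -> x != r -> (x \notin p \/ t = x) ->
  forall u, u \in p -> u \notin Xset E A r x.
Proof.
move=> d xr h u up; apply/negP => uX.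
have [p1 [p2 [ep xp1]]] := avoidX d up uX xr.
case: h => [xp | tx].
  by rewrite ep mem_cat xp1 in xp.
move: d; rewrite /dpath => /and4P [_ /eqP lt _ /= /andP [_ un]].
have xl : x \in u :: p2 by rewrite -tx -lt ep last_cat /=; apply: mem_last.
move: un; rewrite ep cat_uniq => /and3P [_ /negP hh _]; apply: hh.
by apply/hasP; exists x.
Qed.

Lemma suffix_ex (V : finType) (E : rel V) (U : {set V}) (p : seq V) (w0 : V) :
  (w0 \in U) || has (fun v => v \in U) p -> path E w0 p -> uniq p ->
  last w0 p \notin U ->
  exists w q, [/\ w \in U, w \in w0 :: p, path E w q & uniq q] /\
     [/\ all (fun v => v \notin U) q, last w q = last w0 p & {subset q <= p}].
Proof.
elim: p w0 => [|v p IH] w0 /=.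
  by rewrite orbF => wU _ _ wU'; rewrite wU in wU'.
move=> h /andP [Ew0v pth] /andP [vp up] lst.
case: (boolP ((v \in U) || has (fun v => v \in U) p)) => hv.
  have [w [q [[wU wp pq uq] [fq lq sq]]]] := IH v hv pth up lst.
  exists w, q; split; split => //.
    by rewrite in_cons wp orbT.
  by move=> a /sq ap; rewrite in_cons ap orbT.
rewrite (negPf hv) orbF in h.
exists w0, (v :: p); split; split.
- by [].
- by rewrite in_cons eqxx.
- by rewrite /= Ew0v pth.
- by rewrite /= vp up.
- move: hv; rewrite negb_or => /andP [vU hp].
  apply/allP => a; rewrite in_cons => /orP [/eqP -> // | ap].
  exact: (hasPn hp a ap).
- by [].
- by [].
Qed.

Lemma fresh (V : finType) (E : rel V) (A U : {set V}) (r t : V) (p : seq V) :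
  dpath E A r p t -> (forall w, w \in U -> w \in A -> w = r) ->
  forall w, w \in p -> w \notin U /\ w \in A.
Proof.
move=> /and4P [_ _ al /= /andP [rp _]] inv w wp.
have wA : w \in A by apply: (allP al); rewrite in_cons wp orbT.
split => //; apply/negP => wU; have wr := inv w wU wA.
by rewrite -wr wp in rp.
Qed.

Lemma level (V : finType) (E : rel V) (s : V) (A : {set V}) (r x : V) U F :
  r \in A -> bottleneck E A r x -> out_tree E s U F ->
  (forall w, w \in U -> w \in A -> w = r) -> r \in U ->
  exists U1 F1, [/\ out_tree E s U1 F1, x \in leaves U1 F1,
     (forall w, w \in U1 -> w \in x |: Xset E A r x -> w = x) &
     #|leaves U F :\ r| + nondeg E A r <= #|leaves U1 F1 :\ x|].
Proof.
move=> rA bx tr inv rU.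
have bx' := bx; move: bx' => /andP [xDr _].
move: xDr; rewrite in_setD1 => /andP [xr xD].
have [xA _] := diblockP xD xr.
have rD : r \in diblock E A r by rewrite in_set rA eqxx.
have xU : x \notin U by apply/negP => xU; rewrite (inv x xU xA) eqxx in xr.
have XD : forall w, w \in Xset E A r x -> w \in A /\ w \notin diblock E A r.
  by move=> w; rewrite in_set in_setD => /andP [/andP [-> ->] _].
have rX : r \notin x |: Xset E A r x.
  rewrite in_setU1 negb_or eq_sym xr /=; apply/negP => /XD [_].
  by rewrite rD.
have LU : forall a, a \in leaves U F -> a \in U.
  by move=> a; rewrite in_set => /andP [].
have ex : [exists x, bottleneck E A r x] by apply/existsP; exists x.
rewrite /nondeg ex /=.
case: (boolP (#|diblock E A r| == 2)) => hD /=.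
- have rx : r != x by rewrite eq_sym.
  have [p [dp _]] := pathto rA xD xr rx.
  have [pth lst _ un] := and4P dp.
  move: un => /= /andP [_ un].
  have fr := fresh dp inv.
  have fr' : all (fun w => w \notin U) p.
    by apply/allP => w /fr [].
  have [F1 [tr1 sub1 lst1]] := ext_path tr rU pth un fr'.
  have pne : p != [::].
    by apply/negP => /eqP p0; move: lst; rewrite p0 /= eq_sym (negPf xr).
  exists (U :|: [set w in p]), F1; split => //.
  + by rewrite -(eqP lst); apply: lst1; rewrite pne orbT.
  + move=> w; rewrite in_setU in_set => /orP [wU | wp] wX.
      have wA : w \in A.
        by move: wX; rewrite in_setU1 => /orP [/eqP -> // | /XD []].
      have wr := inv w wU wA; subst w.
      by rewrite wX in rX.
    move: wX; rewrite in_setU1 => /orP [/eqP // | wX].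
    have := noX dp xr (or_intror erefl) wp.
    by rewrite wX.
  + rewrite addn0; apply: subset_leq_card; apply/subsetP => a aL.
    rewrite in_setD1 (sub1 a aL) andbT.
    apply/negP => /eqP ax; move: aL; rewrite in_setD1 => /andP [_ /LU].
    by rewrite ax (negPf xU).
- have : 0 < #|diblock E A r :\ x :\ r|.
    have rDx : r \in diblock E A r :\ x by rewrite in_setD1 eq_sym xr rD.
    move: hD; rewrite (cardsD1 x) xD (cardsD1 r (diblock E A r :\ x)) rDx.
    by case: #|_|.
  case/card_gt0P => z; rewrite !in_setD1 => /and3P [zr zx zD].
  have xz : x != z by rewrite eq_sym.
  have [q [dq xq]] := pathto rA zD zr xz.
  have [p [dp zp]] := pathto rA xD xr zx.
  have [qth lstq _ unq] := and4P dq.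
  move: unq => /= /andP [_ unq].
  have frq := fresh dq inv.
  have frq' : all (fun w => w \notin U) q.
    by apply/allP => w /frq [].
  have [F1 [tr1 sub1 lst1]] := ext_path tr rU qth unq frq'.
  have qne : q != [::].
    by apply/negP => /eqP q0; move: lstq; rewrite q0 /= eq_sym (negPf zr).
  set U1 := U :|: [set w in q].
  have zl1 : z \in leaves U1 F1 by rewrite -(eqP lstq); apply: lst1; rewrite qne orbT.
  have [pth lstp _ unp] := and4P dp.
  move: unp => /= /andP [rp unp].
  have frp := fresh dp inv.
  have xU1 : x \notin U1 by rewrite in_setU in_set negb_or xU.
  have rU1 : r \in U1 by rewrite in_setU rU.
  have [w [q2 [[wU1 wp pq2 uq2] [fq2 lq2 sq2]]]] :=
    suffix_ex (U := U1) (E := E) (p := p) (w0 := r) (introT orP (or_introl rU1)) pth unp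
      (eq_ind_r (fun a => a \notin U1) xU1 (eqP lstp)).
  have [F2 [tr2 sub2 lst2]] := ext_path tr1 wU1 pq2 uq2 fq2.
  have q2ne : q2 != [::].
    apply/negP => /eqP q0; move: lq2; rewrite q0 /= (eqP lstp) => wx.
    by rewrite wx (negPf xU1) in wU1.
  exists (U1 :|: [set v in q2]), F2; split => //.
  + by rewrite -(eqP lstp) -lq2; apply: lst2; rewrite q2ne orbT.
  + move=> v /setUP [/setUP [vU | ] | ] vX.
    * have vA : v \in A.
        by move: vX; rewrite in_setU1 => /orP [/eqP -> // | /XD []].
      have vr := inv v vU vA; subst v.
      by rewrite vX in rX.
    * rename vX into vq; rewrite in_set in vq; move=> vX.
      move: vX; rewrite in_setU1 => /orP [/eqP // | vX].
      have := noX dq xr (or_introl xq) vq.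
      by rewrite vX.
    * rename vX into vq2; rewrite in_set in vq2; move=> vX.
      move: vX; rewrite in_setU1 => /orP [/eqP // | vX].
      have := noX dp xr (or_intror erefl) (sq2 v vq2).
      by rewrite vX.
  + have wL : forall a, a \in U -> a != r -> a != w.
      move=> a aU ar; move: wp; rewrite in_cons => /orP [/eqP -> // | wp].
      apply/negP => /eqP aw; have [wU _] := frp w wp.
      by rewrite -aw aU in wU.
    have zw : z != w.
      move: wp; rewrite in_cons => /orP [/eqP -> // | wp].
      by apply/negP => /eqP zw; rewrite zw wp in zp.
    have zU : z \notin U.
      have [zA _] := diblockP zD zr.
      by apply/negP => zU; rewrite (inv z zU zA) eqxx in zr.
    have -> : #|leaves U F :\ r| + 1 = #|z |: (leaves U F :\ r)|.
      by rewrite cardsU1 in_setD1 in_set (negPf zU) !andbF addnC.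
    apply: subset_leq_card; apply/subsetP => a.
    rewrite in_setU1 => /orP [/eqP -> | aL].
      rewrite in_setD1 zx /=; apply: sub2.
      by rewrite in_setD1 zw zl1.
    have aU : a \in U by move: aL; rewrite in_setD1 => /andP [_ /LU].
    have ar : a != r by move: aL; rewrite in_setD1 => /andP [].
    rewrite in_setD1; apply/andP; split.
      by apply/negP => /eqP ax; rewrite ax (negPf xU) in aU.
    apply: sub2; rewrite in_setD1 (wL a aU ar) /=.
    exact: sub1.
Qed.

Lemma main_ind (V : finType) (E : rel V) (s : V) (A : {set V}) (r y : V) (k : nat) :
  cdpath E A r y k -> r \in A -> forall U F, out_tree E s U F -> r \in leaves U F ->
  (forall w, w \in U -> w \in A -> w = r) ->
  exists U' F', out_tree E s U' F' /\ #|leaves U F :\ r| + k <= #|leaves U' F'|.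
Proof.
elim => {A r y k} [A r | A r x y k bx cd IH] rA U F tr rl inv.
  exists U, F; split => //.
  rewrite [X in _ <= X](cardsD1 r) rl /nondeg.
  by case: (~~ _) => /=; lia.
have rU : r \in U by move: rl; rewrite in_set => /andP [].
have [U1 [F1 [tr1 xl1 inv1 c1]]] := level rA bx tr inv rU.
have [U' [F' [tr' c']]] := IH (setU11 x _) U1 F1 tr1 xl1 inv1.
exists U', F'; split => //; lia.
Qed.

Unset Implicit Arguments.

Theorem lemma11 (V : finType) (E : rel V) (s y : V) (k l : nat) :
  irreflexive E ->
  1 < #|V| ->
  (forall v, connect E s v) ->
  cdpath E [set: V] s y k ->
  0 < l -> l <= k ->
  exists (U : {set V}) (F : {set V * V}),
    out_tree E s U F /\ l <= #|leaves U F|.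
Proof.
move=> _ _ _ cd _ lk.
have sl : s \in leaves [set s] (set0 : {set V * V}).
  by rewrite in_set set11 /=; apply/forallP => u; rewrite in_set0.
have [U [F [tr c]]] := main_ind cd (in_setT s) (tree0 E s) sl
  (fun w ws _ => (set1P ws)).
exists U, F; split => //.
have e : leaves [set s] (set0 : {set V * V}) :\ s = set0.
  apply/setP => w; rewrite in_setD1 in_set in_set1 in_set0.
  by case: (w == s).
move: c; rewrite e cards0 add0n => c.
exact: leq_trans lk c.
Qed.
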